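(* Let $(X,d)$ be a $\delta$-hyperbolic space and $a,b$ isometries of $X$. (i) If there is $x\in X$ with $d(a^px,b^qx)>\max[d(x,a^px),d(x,b^qx)]+2\delta$ for all $(p,q)\in\mathbb Z^*\times\mathbb Z^*$, then the subgroup of $\operatorname{Isom}(X,d)$ generated by $a$ and $b$ is free, freely generated by $a,b$. (ii) If there is $x\in X$ with $d(a^px,b^qx)>\max[d(x,a^px),d(x,b^qx)]+2\delta$ for all $(p,q)\in(\mathbb Z^*\times\mathbb Z^* )\setminus(\mathbb Z^-\times\mathbb Z^-)$, then the semigroup generated by $a$ and $b$ is free.
   Context: $\mathbb Z^*=\mathbb Z\setminus\{0\}$, $\mathbb Z^-$ the negative integers. $\delta$-hyperbolic: geodesic, proper metric space all of whose geodesic triangles are $\delta$-thin in the tripod sense (Gromov products $(y|z)_x=\frac12(d(x,y)+d(x,z)-d(y,z))$; triangle mapped onto its tripod isometrically on each side, points with same image at distance $\le\delta$). A semigroup generated by $\{a,b\}$ is free if distinct nonempty positive words in $a,b$ give distinct elements. *)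

(* Defs.v *)
From Stdlib Require Import Reals Lra ZArith List.
Open Scope R_scope.

Set Implicit Arguments.

Section Defs.
Variable X : Type.
Variable d : X -> X -> R.

Definition is_metric : Prop :=
  (forall x y, d x y = 0 <-> x = y) /\
  (forall x y, d x y = d y x) /\
  (forall x y z, d x z <= d x y + d y z).

(** gamma is a geodesic segment from x to y, parametrised by arc length
    on [0, d x y] (values outside this interval are irrelevant). *)
Definition geodesic (gamma : R -> X) (x y : X) : Prop :=
  gamma 0 = x /\ gamma (d x y) = y /\
  forall s t, 0 <= s <= d x y -> 0 <= t <= d x y ->
    d (gamma s) (gamma t) = Rabs (s - t).

Definition geodesic_space : Prop :=
  forall x y, exists gamma, geodesic gamma x y.

(** Proper: closed balls are compact (sequential compactness, metric space). *)
Definition proper_space : Prop :=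
  forall (x : X) (r : R) (u : nat -> X),
    (forall n, d x (u n) <= r) ->
    exists (phi : nat -> nat) (y : X),
      (forall n, (phi n < phi (S n))%nat) /\ d x y <= r /\
      forall eps, eps > 0 -> exists N, forall n, (n >= N)%nat ->
        d (u (phi n)) y < eps.

Definition gromov (x y z : X) : R := (d x y + d x z - d y z) / 2.

(** Geodesic triangle with sides g1 : x -> y, g2 : y -> z, g3 : z -> x is
    delta-thin in the tripod sense: the map to the comparison tripod is
    isometric on each side, and points with the same image (which lie on the
    two sides issuing from a common vertex, at the same distance t from it,
    with t at most the Gromov product at that vertex) are delta-close. *)
Definition thin_triangle (delta : R) (x y z : X) (g1 g2 g3 : R -> X) : Prop :=
  (forall t, 0 <= t <= gromov x y z -> d (g1 t) (g3 (d z x - t)) <= delta) /\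
  (forall t, 0 <= t <= gromov y z x -> d (g2 t) (g1 (d x y - t)) <= delta) /\
  (forall t, 0 <= t <= gromov z x y -> d (g3 t) (g2 (d y z - t)) <= delta).

Definition hyperbolic (delta : R) : Prop :=
  is_metric /\ geodesic_space /\ proper_space /\
  forall x y z g1 g2 g3,
    geodesic g1 x y -> geodesic g2 y z -> geodesic g3 z x ->
    thin_triangle delta x y z g1 g2 g3.

Record isometry := {
  iso_f : X -> X;
  iso_g : X -> X;
  iso_fg : forall x, iso_f (iso_g x) = x;
  iso_gf : forall x, iso_g (iso_f x) = x;
  iso_dist : forall x y, d (iso_f x) (iso_f y) = d x y
}.

Definition zpow (a : isometry) (p : Z) : X -> X :=
  match p with
  | Z0 => fun x => x
  | Zpos n => Nat.iter (Pos.to_nat n) (iso_f a)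
  | Zneg n => Nat.iter (Pos.to_nat n) (iso_g a)
  end.

(** Group words in a, b: letter (gen, inv), gen = true means a,
    inv = true means the inverse letter. *)
Definition letter_map (a b : isometry) (l : bool * bool) : X -> X :=
  let g := if fst l then a else b in
  if snd l then iso_g g else iso_f g.

Definition eval_word (a b : isometry) (w : list (bool * bool)) : X -> X :=
  fold_right (fun (l : bool * bool) (f : X -> X) => fun x => letter_map a b l (f x)) (fun x => x) w.

Fixpoint reduced (w : list (bool * bool)) : Prop :=
  match w with
  | nil => True
  | l :: w' =>
      match w' with
      | nil => True
      | l' :: _ => ~ (fst l = fst l' /\ snd l = negb (snd l'))
      end /\ reduced w'
  end.

Definition freely_generates_group (a b : isometry) : Prop :=
  forall w, w <> nil -> reduced w -> ~ (forall x, eval_word a b w x = x).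

Definition eval_pos_word (a b : isometry) (w : list bool) : X -> X :=
  fold_right (fun (l : bool) (f : X -> X) => fun x => (if l then iso_f a else iso_f b) (f x))
             (fun x => x) w.

Definition free_semigroup (a b : isometry) : Prop :=
  forall w1 w2, w1 <> nil -> w2 <> nil -> w1 <> w2 ->
    ~ (forall x, eval_pos_word a b w1 x = eval_pos_word a b w2 x).

End Defs.

(* Main.v *)
Require Import Defs.
From Stdlib Require Import Reals ZArith List Lra Lia Bool.
Open Scope R_scope.

Lemma met_sym {X} {d : X -> X -> R} : is_metric d -> forall x y, d x y = d y x.
Proof. intros [_ [H _]]; exact H. Qed.
Lemma met_tri {X} {d : X -> X -> R} : is_metric d -> forall x y z, d x z <= d x y + d y z.
Proof. intros [_ [_ H]]; exact H. Qed.
Lemma met_0 {X} {d : X -> X -> R} : is_metric d -> forall x, d x x = 0.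
Proof. intros [H _] x; apply H; reflexivity. Qed.
Lemma met_pos {X} {d : X -> X -> R} : is_metric d -> forall x y, 0 <= d x y.
Proof. intros H x y. pose proof (met_tri H x y x). rewrite (met_0 H) in H0.
  rewrite (met_sym H y x) in H0. lra. Qed.

Lemma iter_inv {X} (f g : X -> X) : (forall y, g (f y) = y) ->
  forall n y, Nat.iter n g (Nat.iter n f y) = y.
Proof. intros H n; induction n as [|n IH]; intros y; [reflexivity|].
  rewrite (Nat.iter_succ_r n X g). simpl (Nat.iter (S n) f y). rewrite H. apply IH. Qed.

Lemma iter_dist {X} (d : X -> X -> R) (f : X -> X) : (forall y z, d (f y) (f z) = d y z) ->
  forall n y z, d (Nat.iter n f y) (Nat.iter n f z) = d y z.
Proof. intros H n; induction n as [|n IH]; intros y z; [reflexivity|].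
  rewrite !Nat.iter_succ. rewrite H. apply IH. Qed.

Lemma iso_g_dist {X} {d : X -> X -> R} (a : isometry d) y z :
  d (iso_g a y) (iso_g a z) = d y z.
Proof. rewrite <- (iso_dist a). rewrite !iso_fg. reflexivity. Qed.

Lemma zpow_pos {X} {d : X -> X -> R} (a : isometry d) n y :
  zpow a (Z.of_nat n) y = Nat.iter n (iso_f a) y.
Proof. destruct n as [|n]; [reflexivity|]. unfold zpow. cbn [Z.of_nat].
  rewrite SuccNat2Pos.id_succ. reflexivity. Qed.

Lemma zpow_neg {X} {d : X -> X -> R} (a : isometry d) n y :
  zpow a (- Z.of_nat n) y = Nat.iter n (iso_g a) y.
Proof. destruct n as [|n]; [reflexivity|]. unfold zpow. cbn [Z.of_nat Z.opp].
  rewrite SuccNat2Pos.id_succ. reflexivity. Qed.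

Lemma Zcase (e : Z) : exists n, e = Z.of_nat n \/ e = (- Z.of_nat n)%Z.
Proof. destruct (Z_le_gt_dec 0 e).
  - exists (Z.to_nat e); left; lia.
  - exists (Z.to_nat (-e)); right; lia. Qed.

Lemma zpow_succ {X} {d : X -> X -> R} (a : isometry d) e y :
  zpow a (e + 1) y = iso_f a (zpow a e y).
Proof. destruct (Zcase e) as [n [-> | ->]].
  - replace (Z.of_nat n + 1)%Z with (Z.of_nat (S n)) by lia.
    rewrite !zpow_pos. reflexivity.
  - destruct n as [|n].
    + replace (- Z.of_nat 0 + 1)%Z with (Z.of_nat 1) by lia.
      replace (- Z.of_nat 0)%Z with (Z.of_nat 0) by lia.
      rewrite !zpow_pos. reflexivity.
    + replace (- Z.of_nat (S n) + 1)%Z with (- Z.of_nat n)%Z by lia.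
      rewrite !zpow_neg, Nat.iter_succ, iso_fg. reflexivity. Qed.

Lemma zpow_pred {X} {d : X -> X -> R} (a : isometry d) e y :
  zpow a (e - 1) y = iso_g a (zpow a e y).
Proof. replace e with ((e - 1) + 1)%Z at 2 by lia. rewrite zpow_succ, iso_gf.
  reflexivity. Qed.

Lemma zpow_inv {X} {d : X -> X -> R} (a : isometry d) e y :
  zpow a (- e) (zpow a e y) = y.
Proof. destruct (Zcase e) as [n [-> | ->]].
  - rewrite zpow_pos, zpow_neg. apply iter_inv. intro; apply iso_gf.
  - rewrite Z.opp_involutive, zpow_pos, zpow_neg. apply iter_inv. intro; apply iso_fg. Qed.

Lemma zpow_inv' {X} {d : X -> X -> R} (a : isometry d) e y :
  zpow a e (zpow a (- e) y) = y.
Proof. pose proof (zpow_inv a (- e) y). rewrite Z.opp_involutive in H. exact H. Qed.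

Lemma zpow_dist {X} {d : X -> X -> R} (a : isometry d) e y z :
  d (zpow a e y) (zpow a e z) = d y z.
Proof. destruct (Zcase e) as [n [-> | ->]].
  - rewrite !zpow_pos. apply iter_dist. intros; apply iso_dist.
  - rewrite !zpow_neg. apply iter_dist. intros; apply iso_g_dist. Qed.

Lemma geo_rev {X} {d : X -> X -> R} : is_metric d -> forall g p q,
  geodesic d g p q -> geodesic d (fun s => g (d p q - s)) q p.
Proof. intros Hm g p q [g0 [g1 gd]]. split; [|split].
  - replace (d p q - 0) with (d p q) by ring. exact g1.
  - rewrite (met_sym Hm q p). replace (d p q - d p q) with 0 by ring. exact g0.
  - intros s t Hs Ht. rewrite (met_sym Hm q p) in Hs, Ht. rewrite gd by lra.
    replace (d p q - s - (d p q - t)) with (t - s) by ring. apply Rabs_minus_sym. Qed.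

Lemma gromov_nonneg {X} {d : X -> X -> R} : is_metric d -> forall w x y,
  0 <= gromov d w x y /\ gromov d w x y <= d w x /\ gromov d w x y <= d w y.
Proof. intros Hm w x y. unfold gromov.
  pose proof (met_tri Hm x w y). pose proof (met_tri Hm w x y). pose proof (met_tri Hm w y x).
  rewrite (met_sym Hm x w) in H. rewrite (met_sym Hm y x) in H1. lra. Qed.

Lemma thin_pair {X} {d : X -> X -> R} delta : hyperbolic d delta -> forall w x y gx gy,
  geodesic d gx w x -> geodesic d gy w y ->
  forall t, 0 <= t <= gromov d w x y -> d (gx t) (gy t) <= delta.
Proof. intros [Hm [Hg [_ Ht]]] w x y gx gy Gx Gy t Htr.
  destruct (Hg x y) as [gxy Gxy].
  destruct (Ht w x y gx gxy _ Gx Gxy (geo_rev Hm _ _ _ Gy)) as [H1 _].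
  specialize (H1 t Htr). cbv beta in H1.
  rewrite (met_sym Hm y w) in H1. replace (d w y - (d w y - t)) with t in H1 by ring.
  exact H1. Qed.

Lemma four_point {X} {d : X -> X -> R} delta : hyperbolic d delta ->
  forall w x y z, gromov d w x y <= gromov d w x z + delta \/
                  gromov d w y z <= gromov d w x z + delta.
Proof. intros Hh w x y z. pose proof Hh as [Hm [Hg _]].
  destruct (Hg w x) as [gx Gx]. destruct (Hg w y) as [gy Gy]. destruct (Hg w z) as [gz Gz].
  assert (key : forall m, 0 <= m -> m <= gromov d w x y -> m <= gromov d w y z ->
     m <= gromov d w x z + delta).
  { intros m H0 H1 H2.
    pose proof (gromov_nonneg Hm w x y). pose proof (gromov_nonneg Hm w y z).
    pose proof (thin_pair delta Hh w x y gx gy Gx Gy m ltac:(lra)) as T1.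
    pose proof (thin_pair delta Hh w y z gy gz Gy Gz m ltac:(lra)) as T2.
    destruct Gx as [_ [gx1 gxd]]. destruct Gz as [_ [gz1 gzd]].
    assert (E1 : d (gx (d w x)) (gx m) = Rabs (d w x - m)) by (apply gxd; lra).
    assert (E2 : d (gz m) (gz (d w z)) = Rabs (m - d w z)) by (apply gzd; lra).
    rewrite gx1 in E1. rewrite gz1 in E2.
    rewrite Rabs_right in E1 by lra. rewrite Rabs_left1 in E2 by lra.
    pose proof (met_tri Hm x (gx m) z). pose proof (met_tri Hm (gx m) (gy m) z).
    pose proof (met_tri Hm (gy m) (gz m) z).
    unfold gromov. lra. }
  destruct (Rle_dec (gromov d w x y) (gromov d w y z)).
  - left. apply key; [apply gromov_nonneg; exact Hm | lra | lra].
  - right. apply key; [apply gromov_nonneg; exact Hm | lra | lra]. Qed.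

Lemma delta_nonneg {X} {d : X -> X -> R} delta (x : X) : hyperbolic d delta -> 0 <= delta.
Proof. intros [Hm [Hg [_ Ht]]]. destruct (Hg x x) as [g G].
  pose proof G as [g0 [g1 _]].
  destruct (Ht x x x g g g G G G) as [H1 _].
  assert (Hz : gromov d x x x = 0) by (unfold gromov; rewrite (met_0 Hm); lra).
  specialize (H1 0 ltac:(lra)). replace (d x x - 0) with (d x x) in H1 by ring.
  rewrite g0, g1, (met_0 Hm) in H1. exact H1. Qed.

Definition sy {X} {d : X -> X -> R} (a b : isometry d) (s : bool * Z) : X -> X :=
  zpow (if fst s then a else b) (snd s).
Definition syi {X} {d : X -> X -> R} (a b : isometry d) (s : bool * Z) : X -> X :=
  zpow (if fst s then a else b) (- snd s).
Fixpoint evalS {X} {d : X -> X -> R} (a b : isometry d) (l : list (bool * Z)) (y : X) : X :=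
  match l with nil => y | s :: r => sy a b s (evalS a b r y) end.
Definition Cnd {X} (d : X -> X -> R) delta (a b : isometry d) x s1 s2 : Prop :=
  d (syi a b s1 x) (sy a b s2 x) >
    Rmax (d x (syi a b s1 x)) (d x (sy a b s2 x)) + 2 * delta.
Fixpoint chainC {X} (d : X -> X -> R) delta (a b : isometry d) x (l : list (bool * Z)) : Prop :=
  match l with
  | nil => True
  | s1 :: r => match r with nil => True | s2 :: _ => Cnd d delta a b x s1 s2 /\ chainC d delta a b x r end
  end.

Lemma sy_dist {X} {d : X -> X -> R} (a b : isometry d) s y z : d (sy a b s y) (sy a b s z) = d y z.
Proof. apply zpow_dist. Qed.
Lemma syi_sy {X} {d : X -> X -> R} (a b : isometry d) s y : syi a b s (sy a b s y) = y.
Proof. apply zpow_inv. Qed.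
Lemma sy_syi {X} {d : X -> X -> R} (a b : isometry d) s y : sy a b s (syi a b s y) = y.
Proof. apply zpow_inv'. Qed.

Lemma chainL {X} {d : X -> X -> R} delta (a b : isometry d) x : hyperbolic d delta ->
  forall l s z, chainC d delta a b x (s :: l) ->
  gromov d x z (sy a b s x) < d x (sy a b s x) / 2 ->
  d z (evalS a b (s :: l) x) > d z x.
Proof.
  intros Hh. pose proof Hh as [Hm _].
  assert (base : forall s z, gromov d x z (sy a b s x) < d x (sy a b s x) / 2 ->
     d z (sy a b s x) > d z x).
  { intros s z Hg. unfold gromov in Hg. rewrite (met_sym Hm z x). lra. }
  induction l as [|s2 l IH]; intros s z Hc Hg.
  - simpl. apply base; exact Hg.
  - destruct Hc as [Hc Hc'].
    set (u := syi a b s x). set (z' := syi a b s z).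
    set (g1 := sy a b s x). set (g2 := sy a b s2 x).
    assert (F1 : d x u = d x g1).
    { unfold u, g1. rewrite <- (sy_dist a b s x (syi a b s x)), sy_syi. apply met_sym; exact Hm. }
    assert (F2 : d x z' = d g1 z).
    { unfold z', g1. rewrite <- (sy_dist a b s x (syi a b s z)), sy_syi. reflexivity. }
    assert (F3 : d u z' = d x z).
    { unfold u, z'. rewrite <- (sy_dist a b s (syi a b s x) (syi a b s z)), !sy_syi. reflexivity. }
    assert (F4 : d z' x = d z g1).
    { unfold z', g1. rewrite <- (sy_dist a b s (syi a b s z) x), sy_syi. reflexivity. }
    unfold Cnd in Hc. fold u g2 in Hc.
    pose proof (Rmax_l (d x u) (d x g2)). pose proof (Rmax_r (d x u) (d x g2)).
    pose proof (four_point delta Hh x u z' g2) as FP.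
    assert (Hg2 : gromov d x z' g2 < d x g2 / 2).
    { unfold gromov in *. fold g1 in Hg. pose proof (met_sym Hm g1 z).
      pose proof (met_sym Hm z' g2). destruct FP; lra. }
    specialize (IH s2 z' Hc' Hg2).
    change (d z (sy a b s (evalS a b (s2 :: l) x)) > d z x).
    rewrite <- (sy_syi a b s z) at 1. rewrite sy_dist. fold z'.
    pose proof (base s z Hg). fold g1 in H1. lra.
Qed.

Lemma chainK {X} {d : X -> X -> R} delta (a b : isometry d) x : hyperbolic d delta ->
  forall l s, chainC d delta a b x (s :: l) ->
  gromov d x (evalS a b (s :: l) x) (sy a b s x) >= d x (sy a b s x) / 2.
Proof.
  intros Hh. pose proof Hh as [Hm _].
  induction l as [|s2 l IH]; intros s Hc.
  - simpl. unfold gromov. rewrite (met_0 Hm). pose proof (met_pos Hm x (sy a b s x)). lra.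
  - destruct Hc as [Hc Hc']. specialize (IH s2 Hc').
    set (E2 := evalS a b (s2 :: l) x) in *.
    set (u := syi a b s x). set (g1 := sy a b s x). set (g2 := sy a b s2 x) in *.
    assert (F1 : d x u = d x g1).
    { unfold u, g1. rewrite <- (sy_dist a b s x (syi a b s x)), sy_syi. apply met_sym; exact Hm. }
    assert (F2 : d x (sy a b s E2) = d u E2).
    { rewrite <- (sy_dist a b s u E2). unfold u. rewrite sy_syi. reflexivity. }
    assert (F3 : d (sy a b s E2) g1 = d E2 x).
    { unfold g1. rewrite sy_dist. reflexivity. }
    unfold Cnd in Hc. fold u g2 in Hc.
    pose proof (Rmax_l (d x u) (d x g2)). pose proof (Rmax_r (d x u) (d x g2)).
    pose proof (four_point delta Hh x u E2 g2) as FP.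
    change (gromov d x (sy a b s E2) g1 >= d x g1 / 2).
    unfold gromov in *. rewrite (met_sym Hm E2 x) in F3. destruct FP; lra.
Qed.

Lemma junction {X} {d : X -> X -> R} delta (a b : isometry d) x : hyperbolic d delta ->
  forall s1 l1 s2 l2, chainC d delta a b x (s1 :: l1) -> chainC d delta a b x (s2 :: l2) ->
  d (sy a b s1 x) (sy a b s2 x) > Rmax (d x (sy a b s1 x)) (d x (sy a b s2 x)) + 2 * delta ->
  evalS a b (s1 :: l1) x <> evalS a b (s2 :: l2) x.
Proof.
  intros Hh s1 l1 s2 l2 H1 H2 Hj Heq. pose proof Hh as [Hm _].
  pose proof (chainK delta a b x Hh l1 s1 H1) as K.
  set (E1 := evalS a b (s1 :: l1) x) in *.
  set (g1 := sy a b s1 x) in *. set (g2 := sy a b s2 x) in *.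
  pose proof (Rmax_l (d x g1) (d x g2)). pose proof (Rmax_r (d x g1) (d x g2)).
  pose proof (four_point delta Hh x g1 E1 g2) as FP.
  assert (G : gromov d x E1 g2 < d x g2 / 2).
  { unfold gromov in *. rewrite (met_sym Hm g1 E1) in FP. destruct FP; lra. }
  pose proof (chainL delta a b x Hh l2 s2 E1 H2 G) as L.
  rewrite <- Heq in L. rewrite (met_0 Hm) in L. pose proof (met_pos Hm E1 x). lra.
Qed.

Lemma nofix {X} {d : X -> X -> R} delta (a b : isometry d) x : hyperbolic d delta ->
  forall s l, chainC d delta a b x (s :: l) -> d x (sy a b s x) > 0 ->
  evalS a b (s :: l) x <> x.
Proof.
  intros Hh s l Hc Hp Heq. pose proof Hh as [Hm _].
  assert (G : gromov d x x (sy a b s x) < d x (sy a b s x) / 2).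
  { unfold gromov. rewrite (met_0 Hm). lra. }
  pose proof (chainL delta a b x Hh l s x Hc G) as L. rewrite Heq, (met_0 Hm) in L. lra.
Qed.

Fixpoint alt (l : list (bool * Z)) : Prop :=
  match l with
  | nil => True
  | s1 :: r => match r with nil => True | s2 :: _ => fst s1 <> fst s2 /\ alt r end
  end.

Lemma alt_head (c : bool) e e' rest : alt ((c, e) :: rest) -> alt ((c, e') :: rest).
Proof. destruct rest; simpl; auto. Qed.

Lemma chain_of {X} (d : X -> X -> R) delta (a b : isometry d) x (P : bool * Z -> Prop) :
  (forall s1 s2, P s1 -> P s2 -> fst s1 <> fst s2 -> Cnd d delta a b x s1 s2) ->
  forall l, Forall P l -> alt l -> chainC d delta a b x l.
Proof. intros HC l; induction l as [|s1 l IH]; intros HF HA; [exact I|].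
  destruct l as [|s2 l']; [exact I|]. simpl in HA. destruct HA as [HA1 HA2].
  inversion HF; subst. inversion H2; subst. split; [apply HC; auto | apply IH; auto]. Qed.

Lemma eval_pos_cons {X} {d : X -> X -> R} (a b : isometry d) l w y :
  eval_pos_word a b (l :: w) y = (if l then iso_f a else iso_f b) (eval_pos_word a b w y).
Proof. reflexivity. Qed.

Lemma eval_word_cons {X} {d : X -> X -> R} (a b : isometry d) l w y :
  eval_word a b (l :: w) y = letter_map a b l (eval_word a b w y).
Proof. reflexivity. Qed.

Lemma conv_pos {X} {d : X -> X -> R} (a b : isometry d) : forall w (l : bool),
  exists e rest, (forall y, eval_pos_word a b (l :: w) y = evalS a b ((l, e) :: rest) y)
   /\ (e > 0)%Z /\ Forall (fun s => (snd s > 0)%Z) rest /\ alt ((l, e) :: rest).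
Proof.
  induction w as [|l' w IH]; intros l.
  - exists 1%Z, nil. split; [|split; [lia | split; [constructor | exact I]]].
    intros y. destruct l; reflexivity.
  - destruct (IH l') as [e' [rest' [Hev [He [HF HA]]]]].
    destruct (bool_dec l l') as [<-|Hd].
    + exists (e' + 1)%Z, rest'. split; [|split; [lia | split; [exact HF | eapply alt_head; exact HA]]].
      intros y. rewrite eval_pos_cons, Hev. cbn [evalS]. unfold sy. cbn [fst snd].
      rewrite zpow_succ. destruct l; reflexivity.
    + exists 1%Z, ((l', e') :: rest'). split; [|split; [lia | split]].
      * intros y. rewrite eval_pos_cons, Hev. cbn [evalS]. unfold sy at 1. cbn [fst snd].
        destruct l; reflexivity.
      * constructor; [simpl; lia | exact HF].
      * simpl. split; [exact Hd | exact HA].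
Qed.

Lemma letter_one {X} {d : X -> X -> R} (a b : isometry d) c i y :
  letter_map a b (c, i) y = zpow (if c then a else b) (if i then (-1)%Z else 1%Z) y.
Proof. destruct c, i; reflexivity. Qed.

Lemma letter_zpow {X} {d : X -> X -> R} (a b : isometry d) c i e y :
  letter_map a b (c, i) (zpow (if c then a else b) e y) =
  zpow (if c then a else b) (e + (if i then (-1)%Z else 1%Z)) y.
Proof. destruct i.
  - replace (e + -1)%Z with (e - 1)%Z by lia. rewrite zpow_pred. destruct c; reflexivity.
  - rewrite zpow_succ. destruct c; reflexivity. Qed.

Lemma conv_group {X} {d : X -> X -> R} (a b : isometry d) : forall w l, reduced (l :: w) ->
  exists e rest, (forall y, eval_word a b (l :: w) y = evalS a b ((fst l, e) :: rest) y)
   /\ (if snd l then (e < 0)%Z else (e > 0)%Z)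
   /\ Forall (fun s => (snd s <> 0)%Z) rest /\ alt ((fst l, e) :: rest).
Proof.
  induction w as [|l' w IH]; intros [c i] Hred.
  - exists (if i then (-1)%Z else 1%Z), nil. split; [|split; [simpl; destruct i; lia | split; [constructor | exact I]]].
    intros y. simpl fst. rewrite eval_word_cons, letter_one. reflexivity.
  - simpl in Hred. destruct Hred as [Hnot Hred'].
    destruct (IH l' Hred') as [e' [rest' [Hev [He [HF HA]]]]].
    destruct l' as [c' i']. simpl fst in *. simpl snd in *.
    destruct (bool_dec c c') as [<-|Hd].
    + assert (i = i') by (destruct i, i'; simpl in Hnot; tauto). subst i'.
      exists (e' + (if i then (-1)%Z else 1%Z))%Z, rest'.
      split; [|split; [simpl; destruct i; lia | split; [exact HF | eapply alt_head; exact HA]]].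
      intros y. rewrite eval_word_cons, Hev. cbn [evalS]. unfold sy. cbn [fst snd].
      rewrite letter_zpow. reflexivity.
    + exists (if i then (-1)%Z else 1%Z), ((c', e') :: rest').
      split; [|split; [simpl; destruct i; lia | split]].
      * intros y. rewrite eval_word_cons, Hev. cbn [evalS]. unfold sy at 1. cbn [fst snd].
        rewrite letter_one. reflexivity.
      * constructor; [simpl; destruct i'; lia | exact HF].
      * simpl. split; [exact Hd | exact HA].
Qed.

Lemma strip {X} {d : X -> X -> R} (a b : isometry d) x : forall w1 w2, w1 <> w2 ->
  eval_pos_word a b w1 x = eval_pos_word a b w2 x ->
  exists v1 v2, eval_pos_word a b v1 x = eval_pos_word a b v2 x /\
   ((v1 = nil /\ exists l r, v2 = l :: r) \/ (v2 = nil /\ exists l r, v1 = l :: r) \/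
    exists l1 l2 r1 r2, v1 = l1 :: r1 /\ v2 = l2 :: r2 /\ l1 <> l2).
Proof.
  induction w1 as [|l1 r1 IH]; intros w2 Hne Heq.
  - destruct w2 as [|l2 r2]; [congruence|]. exists nil, (l2 :: r2). split; [exact Heq|].
    left. split; [reflexivity | eauto].
  - destruct w2 as [|l2 r2].
    + exists (l1 :: r1), nil. split; [exact Heq|]. right; left. split; [reflexivity | eauto].
    + destruct (bool_dec l1 l2) as [<-|Hd].
      * apply (IH r2); [congruence|]. rewrite !eval_pos_cons in Heq.
        apply (f_equal (iso_g (if l1 then a else b))) in Heq.
        destruct l1; rewrite !iso_gf in Heq; exact Heq.
      * exists (l1 :: r1), (l2 :: r2). split; [exact Heq|]. right; right. eauto 7.
Qed.

Lemma nonfix_gen {X} {d : X -> X -> R} delta x A B : is_metric d -> 0 <= delta ->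
  d A B > Rmax (d x A) (d x B) + 2 * delta -> d x A > 0 /\ d x B > 0.
Proof. intros Hm Hd H. pose proof (Rmax_l (d x A) (d x B)). pose proof (Rmax_r (d x A) (d x B)).
  pose proof (met_tri Hm A x B). rewrite (met_sym Hm A x) in H2. lra. Qed.

Theorem proposition6p5 (X : Type) (d : X -> X -> R) (delta : R)
  (a b : isometry d) :
  hyperbolic d delta ->
  ((exists x : X, forall p q : Z, p <> 0%Z -> q <> 0%Z ->
      d (zpow a p x) (zpow b q x) > Rmax (d x (zpow a p x)) (d x (zpow b q x)) + 2 * delta) ->
    freely_generates_group a b) /\
  ((exists x : X, forall p q : Z, p <> 0%Z -> q <> 0%Z -> ~ (p < 0 /\ q < 0)%Z ->
      d (zpow a p x) (zpow b q x) > Rmax (d x (zpow a p x)) (d x (zpow b q x)) + 2 * delta) ->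
    free_semigroup a b).
Proof.
  intros Hh. pose proof Hh as [Hm _]. split.
  - intros [x Hx] w Hw Hred Hid. destruct w as [|l w]; [congruence|].
    pose proof (delta_nonneg delta x Hh) as Hd0.
    destruct (conv_group a b w l Hred) as [e [rest [Hev [He [HF HA]]]]].
    assert (Hc : chainC d delta a b x ((fst l, e) :: rest)).
    { apply (chain_of d delta a b x (fun s => (snd s <> 0)%Z)).
      - intros [c1 e1] [c2 e2] H1 H2 H12. simpl in H1, H2, H12. unfold Cnd, syi, sy. simpl.
        destruct c1, c2; try congruence.
        + apply Hx; lia.
        + rewrite (met_sym Hm), Rmax_comm. apply Hx; lia.
      - constructor; [simpl; destruct (snd l); lia | exact HF].
      - exact HA. }
    assert (Hp : d x (sy a b (fst l, e) x) > 0).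
    { unfold sy. simpl. destruct (fst l).
      - apply (nonfix_gen delta x _ (zpow b 1 x) Hm Hd0). apply Hx; [destruct (snd l); lia | lia].
      - apply (nonfix_gen delta x (zpow a 1 x) _ Hm Hd0). apply Hx; [lia | destruct (snd l); lia]. }
    apply (nofix delta a b x Hh _ _ Hc Hp). rewrite <- Hev. apply Hid.
  - intros [x Hx] w1 w2 H1 H2 Hne Heq.
    pose proof (delta_nonneg delta x Hh) as Hd0.
    assert (Cpos : forall l, Forall (fun s => (snd s > 0)%Z) l -> alt l -> chainC d delta a b x l).
    { apply (chain_of d delta a b x (fun s => (snd s > 0)%Z)).
      intros [c1 e1] [c2 e2] P1 P2 H12. simpl in P1, P2, H12. unfold Cnd, syi, sy. simpl.
      destruct c1, c2; try congruence.
      + apply Hx; lia.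
      + rewrite (met_sym Hm), Rmax_comm. apply Hx; lia. }
    assert (Ppos : forall c e, (e > 0)%Z -> d x (sy a b (c, e) x) > 0).
    { intros c e He. unfold sy. simpl. destruct c.
      - apply (nonfix_gen delta x _ (zpow b 1 x) Hm Hd0). apply Hx; lia.
      - apply (nonfix_gen delta x (zpow a 1 x) _ Hm Hd0). apply Hx; lia. }
    assert (Nf : forall l r, eval_pos_word a b (l :: r) x <> x).
    { intros l r. destruct (conv_pos a b r l) as [e [rest [Hev [He [HF HA]]]]].
      rewrite Hev. apply (nofix delta a b x Hh).
      - apply Cpos; [constructor; [simpl; lia | exact HF] | exact HA].
      - apply Ppos; exact He. }
    destruct (strip a b x w1 w2 Hne (Heq x)) as [v1 [v2 [Hv [[-> [l [r ->]]] | [[-> [l [r ->]]] | [l1 [l2 [r1 [r2 [-> [-> Hl]]]]]]]]]]].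
    + apply (Nf l r). symmetry; exact Hv.
    + apply (Nf l r). exact Hv.
    + destruct (conv_pos a b r1 l1) as [e1 [rest1 [Hev1 [He1 [HF1 HA1]]]]].
      destruct (conv_pos a b r2 l2) as [e2 [rest2 [Hev2 [He2 [HF2 HA2]]]]].
      rewrite Hev1, Hev2 in Hv. revert Hv. apply (junction delta a b x Hh).
      * apply Cpos; [constructor; [simpl; lia | exact HF1] | exact HA1].
      * apply Cpos; [constructor; [simpl; lia | exact HF2] | exact HA2].
      * unfold sy. simpl. destruct l1, l2; try congruence.
        -- apply Hx; lia.
        -- rewrite (met_sym Hm), Rmax_comm. apply Hx; lia.
Qed.
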